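(* Let $v>0$, $d>0$ and $s\ge\frac d2$. Let $M=\lfloor 2s/d\rfloor+1$. For $i\in\{1,\dots,M\}$, lane $i$ is the horizontal line $y=s-(i-1)d$, and the robots of lane $i$ are at time $0$ at the positions $(s+kd,\ s-(i-1)d)$, $k\in\mathbb{Z}_{\ge0}$, all moving with constant velocity $(-v,0)$; a robot reaches the target when its distance to the origin is at most $s$. For $j\in\{1,\dots,M\}$ let $d_j=s-\sqrt{s^2-(s-(j-1)d)^2}$, and let $$J=\begin{cases}\lfloor s/d\rfloor+1,&\text{if } |s-\lfloor s/d\rfloor d|\le|s-\lceil s/d\rceil d|,\\ \lceil s/d\rceil+1,&\text{otherwise.}\end{cases}$$ Then $d_J=\min_{1\le j\le M}d_j$, so the first robot to reach the target is the one starting at $(s,s-(J-1)d)$, and, measuring time from this first arrival, for every $T>0$ the throughput is $$f_p(T)=\frac1T\sum_{i=1}^{M}N_i(T)-\frac1T,\qquad N_i(T)=\begin{cases}\left\lfloor\frac{vT-d_i+d_J}{d}+1\right\rfloor,& T\ge\frac{d_i-d_J}{v},\\ 0,&\text{otherwise,}\end{cases}$$ and $\displaystyle\lim_{T\to\infty}f_p(T)=\left\lfloor\frac{2s}{d}+1\right\rfloor\frac vd$.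
   Context: Throughput at time $T>0$ after the first robot reaches the target: $f(T)=\frac{N(T)-1}{T}$, where $N(T)$ is the number of robots that reached the target (closed disc of radius $s$ centred at the origin) by time $T$, time $0$ being the arrival of the first robot. $N_i(T)$ is the number of robots of lane $i$ that have arrived by time $T$. This is the ''parallel lanes'' strategy. *)

(* Defs.v *)
From HB Require Import structures.
From mathcomp Require Import all_boot all_order all_algebra.
From mathcomp Require Import all_classical all_reals all_analysis.
From mathcomp Require Import finmap.
Set Implicit Arguments. Unset Strict Implicit. Unset Printing Implicit Defensive.
Import Order.TTheory GRing.Theory Num.Theory.
Local Open Scope classical_set_scope.
Local Open Scope ring_scope.

Section ParallelLanes.
Variables (R : realType) (v d s : R).

(* number of lanes M = floor(2s/d) + 1 (floor(2s/d) >= 0 since s >= d/2) *)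
Definition nlanes : nat := (`|Num.floor (2 * s / d)|%N).+1.

Definition lane_y (i : nat) : R := s - (i%:R - 1) * d.

Definition robot_pos (i k : nat) (t : R) : R * R :=
  (s + k%:R * d - v * t, lane_y i).

Definition in_target (p : R * R) : Prop :=
  Num.sqrt (p.1 ^+ 2 + p.2 ^+ 2) <= s.

Definition valid_lane (i : nat) : Prop := (1 <= i <= nlanes)%N.

Definition first_arrival_time : R :=
  inf [set t : R | 0 <= t /\
         exists i k, valid_lane i /\ in_target (robot_pos i k t)].

Definition reached_by (i k : nat) (T : R) : Prop :=
  exists t : R, 0 <= t /\ t <= first_arrival_time + T /\
                in_target (robot_pos i k t).

Definition N_lane (i : nat) (T : R) : nat :=
  (#|` fset_set [set k : nat | reached_by i k T] |)%fset.

Definition N_total (T : R) : nat :=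
  (#|` fset_set [set ik : nat * nat | valid_lane ik.1 /\ reached_by ik.1 ik.2 T] |)%fset.

Definition throughput (T : R) : R := ((N_total T)%:R - 1) / T.

Definition dist_j (j : nat) : R := s - Num.sqrt (s ^+ 2 - (s - (j%:R - 1) * d) ^+ 2).

Definition Jidx : nat :=
  if `|s - (Num.floor (s / d))%:~R * d| <= `|s - (Num.ceil (s / d))%:~R * d|
  then (`|Num.floor (s / d)|%N).+1
  else (`|Num.ceil (s / d)|%N).+1.

Definition N_formula (i : nat) (T : R) : int :=
  if (dist_j i - dist_j Jidx) / v <= T
  then Num.floor ((v * T - dist_j i + dist_j Jidx) / d + 1)
  else 0.

End ParallelLanes.

(* Main.v *)
Require Import Defs.
From HB Require Import structures.
From mathcomp Require Import all_boot all_order all_algebra.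
From mathcomp Require Import all_classical all_reals all_analysis.
From mathcomp Require Import finmap.
From mathcomp Require Import ring lra.
Import Order.TTheory GRing.Theory Num.Theory.
Import numFieldNormedType.Exports.
Local Open Scope classical_set_scope.
Local Open Scope ring_scope.

Lemma card_set_seq (T : choiceType) (A : set T) (s : seq T) :
  uniq s -> (forall x, A x <-> x \in s) -> (#|` fset_set A|)%fset = size s.
Proof.
move=> us hA.
have -> : A = [set` [fset x in s]%fset].
  apply/funext => x; apply/propext; rewrite hA /=.
  by rewrite inE.
by rewrite set_fsetK card_fseq undup_id.
Qed.

Section Pf.
Variables (R : realType) (v d s : R).
Hypotheses (hv : 0 < v) (hd : 0 < d) (hs : d / 2 <= s).

Definition wl (i : nat) : R := Num.sqrt (s ^+ 2 - (lane_y d s i) ^+ 2).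

Lemma s_gt0 : 0 < s.
Proof. move: hd hs => h1 h2. lra. Qed.

Lemma distE i : dist_j d s i = s - wl i.
Proof. by []. Qed.

Lemma fl2_ge0 : 0 <= Num.floor (2 * s / d).
Proof. rewrite floor_ge0; apply: divr_ge0; have := s_gt0; have := hd; lra. Qed.

Lemma absz_floor2 : ((`|Num.floor (2 * s / d)|%N)%:R : R) = (Num.floor (2 * s / d))%:~R.
Proof. by rewrite -[in RHS](gez0_abs fl2_ge0). Qed.

Lemma valid_y i : valid_lane d s i -> -s <= lane_y d s i <= s.
Proof.
case/andP=> h1 h2.
have hi : (i%:R - 1 : R) = (i.-1)%:R by case: i h1 h2 => // n _ _; rewrite mulrSr addrK.
have hk : ((i.-1)%:R : R) <= 2 * s / d.
  apply: (le_trans _ (floor_le _)); rewrite -absz_floor2 ler_nat.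
  by move: h2; rewrite /nlanes; case: i {h1 hi}.
rewrite ler_pdivlMr // in hk.
have h0 : 0 <= ((i.-1)%:R : R) * d by apply: mulr_ge0 => //; have := hd; lra.
rewrite /lane_y hi; have := s_gt0; move=> hs0; apply/andP; split; lra.
Qed.

Lemma wl_ge0 i : 0 <= wl i.
Proof. exact: sqrtr_ge0. Qed.

Lemma ysq_le i : valid_lane d s i -> lane_y d s i ^+ 2 <= s ^+ 2.
Proof.
move=> /valid_y hy; rewrite -real_normK ?num_real //.
apply: lerXn2r; rewrite ?nnegrE ?normr_ge0 ?ler_norml //.
by have := s_gt0 => h; lra.
Qed.

Lemma wl_sqr i : valid_lane d s i -> wl i ^+ 2 = s ^+ 2 - lane_y d s i ^+ 2.
Proof. by move=> /ysq_le h; rewrite sqr_sqrtr // subr_ge0. Qed.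

Lemma wl_le i : wl i <= s.
Proof.
have E : s = Num.sqrt (s ^+ 2) by rewrite sqrtr_sqr gtr0_norm // s_gt0.
rewrite [X in _ <= X]E; apply: ler_wsqrtr.
by rewrite lerBlDr lerDl sqr_ge0.
Qed.

Lemma target_iff i x : valid_lane d s i ->
  in_target s (x, lane_y d s i) <-> `|x| <= wl i.
Proof.
move=> hi; rewrite /in_target /=.
have E : s = Num.sqrt (s ^+ 2) by rewrite sqrtr_sqr gtr0_norm // s_gt0.
rewrite [X in _ <= X]E ler_sqrt ?sqr_ge0 //.
rewrite -(ler_sqr _ _ : (`|x| ^+ 2 <= wl i ^+ 2) = _) ?nnegrE ?normr_ge0 ?wl_ge0 //.
by rewrite real_normK ?num_real // wl_sqr // lerBrDr.
Qed.

Lemma q_gt0 : 0 < s / d.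
Proof. by rewrite divr_gt0 // s_gt0. Qed.

Lemma fl_ge0 : 0 <= Num.floor (s / d).
Proof. by rewrite floor_ge0 ltW // q_gt0. Qed.

Lemma cl_ge0 : 0 <= Num.ceil (s / d).
Proof. rewrite ceil_ge0; have := q_gt0; move=> h; lra. Qed.

Lemma lane_y_abs (n : int) : 0 <= n -> lane_y d s (`|n|.+1) = s - n%:~R * d.
Proof.
move=> hn; rewrite /lane_y -[in RHS](gez0_abs hn) /=.
by rewrite mulrSr addrK.
Qed.

Lemma yJ_le (n : nat) : `|lane_y d s (Jidx d s)| <= `|s - n%:R * d|.
Proof.
set fl := Num.floor (s / d); set cl := Num.ceil (s / d).
have hfl : fl%:~R * d <= s.
  by rewrite -ler_pdivlMr // floor_le.
have hcl : s <= cl%:~R * d.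
  by rewrite -ler_pdivrMr // ceil_ge.
have H : `|s - fl%:~R * d| <= `|s - n%:R * d| \/ `|s - cl%:~R * d| <= `|s - n%:R * d|.
  have [h|h] := lerP (n%:Z) fl.
    left; have hn : (n%:R : R) <= fl%:~R by rewrite -(ler_int R) in h.
    have hnd : (n%:R : R) * d <= fl%:~R * d by rewrite ler_pM2r.
    rewrite !ger0_norm; lra.
  right.
  have h1 : cl <= n%:Z.
    rewrite ceil_le_int; apply: ltW; apply: (lt_le_trans (floorD1_gt _)).
    by rewrite ler_int lezD1.
  have hn : cl%:~R <= (n%:R : R) by rewrite -(ler_int R) in h1.
  have hnd : cl%:~R * d <= (n%:R : R) * d by rewrite ler_pM2r.
  rewrite !ler0_norm; lra.
rewrite /Jidx -/fl -/cl.
case: ifP => hc.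
  rewrite lane_y_abs ?fl_ge0 //; case: H => H //; exact: le_trans hc H.
rewrite lane_y_abs ?cl_ge0 //; case: H => H //.
move/negbT: hc; rewrite -ltNge => hc; exact: le_trans (ltW hc) H.
Qed.

Lemma lane_y_pred j : (1 <= j)%N -> lane_y d s j = s - (j.-1)%:R * d.
Proof. by case: j => // n _; rewrite /lane_y mulrSr addrK. Qed.

Lemma dist_min j : valid_lane d s j -> dist_j d s (Jidx d s) <= dist_j d s j.
Proof.
move=> hj; rewrite !distE lerD2l lerN2; apply: ler_wsqrtr.
rewrite lerD2l lerN2 -(real_normK (num_real (lane_y d s j))).
rewrite -(real_normK (num_real (lane_y d s (Jidx d s)))).
apply: lerXn2r; rewrite ?nnegrE ?normr_ge0 //.
case/andP: hj => h1 _; rewrite (lane_y_pred _ h1); exact: yJ_le.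
Qed.
Lemma validJ : valid_lane d s (Jidx d s).
Proof.
rewrite /valid_lane /Jidx /nlanes; case: ifP => _; rewrite /= ltnS -lez_nat.
  rewrite gez0_abs ?fl_ge0 // gez0_abs ?fl2_ge0 //.
  apply: le_floor; rewrite -mulrA.
  have := q_gt0 => h; lra.
rewrite gez0_abs ?cl_ge0 // gez0_abs ?fl2_ge0 //.
rewrite floor_ge_int -mulrA.
have hq : 1 <= 2 * (s / d).
  rewrite -ler_pdivrMl ?ltr0n // ler_pdivlMr //; have := hs; lra.
have [h|h] := lerP (Num.ceil (s / d)) 1.
  by apply: le_trans hq; rewrite -(ler_int R) in h.
have h2 : (2 : R) <= (Num.ceil (s / d))%:~R.
  by rewrite -[2%R]/((2%:Z)%:~R) ler_int.
have := ceilB1_lt (s / d); rewrite intrD /= => h3.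
lra.
Qed.

Lemma dist_ge0 i : 0 <= dist_j d s i.
Proof. by rewrite distE subr_ge0 wl_le. Qed.

Lemma arrive_lb i k t : valid_lane d s i ->
  in_target s (robot_pos v d s i k t) -> dist_j d s i + k%:R * d <= v * t.
Proof.
move=> hi; rewrite /robot_pos target_iff // ler_norml => /andP[h1 h2].
rewrite distE; lra.
Qed.

Lemma at_arrival i k : valid_lane d s i ->
  in_target s (robot_pos v d s i k ((dist_j d s i + k%:R * d) / v)).
Proof.
move=> hi; rewrite /robot_pos target_iff // [v * _]mulrC divfK ?gt_eqF //.
have -> : s + k%:R * d - (dist_j d s i + k%:R * d) = wl i by rewrite distE; ring.
by rewrite ger0_norm ?wl_ge0.
Qed.

Lemma first_eq : first_arrival_time v d s = dist_j d s (Jidx d s) / v.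
Proof.
set E := [set t : R | 0 <= t /\ exists i k, valid_lane d s i /\ in_target s (robot_pos v d s i k t)].
have hE : E (dist_j d s (Jidx d s) / v).
  split; first by rewrite divr_ge0 ?dist_ge0 ?ltW.
  exists (Jidx d s), 0%N; split; first exact: validJ.
  have := at_arrival _ 0 validJ; by rewrite mul0r addr0.
have hlb : lbound E (dist_j d s (Jidx d s) / v).
  move=> t [t0 [i [k [hi ht]]]].
  have := arrive_lb _ _ _ hi ht; have := dist_min _ hi.
  have hk : 0 <= k%:R * d by apply: mulr_ge0; rewrite ?ler0n ?ltW.
  rewrite ler_pdivrMr // => h1 h2.
  rewrite mulrC; lra.
apply/le_anti/andP; split.
  apply: (ge_inf _ hE); by exists 0 => t [].
exact: lb_le_inf (ex_intro _ _ hE) hlb.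
Qed.

Lemma reached_iff i k T : valid_lane d s i ->
  reached_by v d s i k T <-> dist_j d s i + k%:R * d <= dist_j d s (Jidx d s) + v * T.
Proof.
move=> hi; rewrite /reached_by first_eq; split.
  case=> t [t0 [tle ht]]; have := arrive_lb _ _ _ hi ht.
  have : v * t <= v * (dist_j d s (Jidx d s) / v + T) by rewrite ler_pM2l.
  rewrite mulrDr [v * (_ / v)]mulrC divfK ?gt_eqF //; lra.
have hk : 0 <= k%:R * d by apply: mulr_ge0; rewrite ?ler0n ?ltW.
have := dist_ge0 i => h0 h.
exists ((dist_j d s i + k%:R * d) / v); split.
  apply: divr_ge0; [lra | exact: ltW].
split; last exact: at_arrival.
rewrite ler_pdivrMr // mulrDl divfK ?gt_eqF //; lra.
Qed.

Definition cnt i T : nat :=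
  let D := dist_j d s (Jidx d s) + v * T - dist_j d s i in
  if 0 <= D then (`|Num.floor (D / d)|%N).+1 else 0%N.

Lemma reach_cnt i k T : valid_lane d s i ->
  reached_by v d s i k T <-> (k < cnt i T)%N.
Proof.
move=> hi; rewrite reached_iff // /cnt.
set D := dist_j d s (Jidx d s) + v * T - dist_j d s i.
have hk : 0 <= k%:R * d by apply: mulr_ge0; rewrite ?ler0n ?ltW.
case: ifP => hD.
  have hf : 0 <= Num.floor (D / d) by rewrite floor_ge0; apply: divr_ge0 => //; exact: ltW.
  have -> : (k < (`|Num.floor (D / d)|%N).+1)%N = (k%:Z <= Num.floor (D / d)).
    by rewrite ltnS -lez_nat gez0_abs.
  rewrite floor_ge_int /= ler_pdivlMr //.
  rewrite /D; split => h; lra.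
move/negbT: hD; rewrite -ltNge /D => hD.
have := dist_ge0 i => h0.
split => // h; lra.
Qed.

Lemma N_lane_cnt i T : valid_lane d s i -> N_lane v d s i T = cnt i T.
Proof.
move=> hi; rewrite /N_lane (@card_set_seq _ _ (iota 0 (cnt i T))) ?iota_uniq ?size_iota //.
by move=> k; rewrite /= reach_cnt // mem_iota.
Qed.

Lemma cnt_formula i T : (cnt i T)%:Z = N_formula v d s i T.
Proof.
rewrite /cnt /N_formula.
set D := dist_j d s (Jidx d s) + v * T - dist_j d s i.
have -> : ((dist_j d s i - dist_j d s (Jidx d s)) / v <= T) = (0 <= D).
  rewrite ler_pdivrMr // /D; apply/idP/idP => h; lra.
case: ifP => // hD.
have -> : (v * T - dist_j d s i + dist_j d s (Jidx d s)) / d + 1 = D / d + 1.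
  by rewrite /D; congr (_ / _ + _); ring.
rewrite floorDrz ?rpred1 // floor1 -addn1 PoszD gez0_abs //.
by rewrite floor_ge0; apply: divr_ge0 => //; exact: ltW.
Qed.

Lemma N_total_cnt T :
  N_total v d s T = sumn [seq cnt i T | i <- iota 1 (nlanes d s)].
Proof.
rewrite /N_total (@card_set_seq _ _
  [seq (i, k) | i <- iota 1 (nlanes d s), k <- iota 0 (cnt i T)]).
- rewrite size_allpairs_dep; congr sumn; apply: eq_map => i; exact: size_iota.
- apply: allpairs_uniq_dep; first exact: iota_uniq.
    by move=> i _; exact: iota_uniq.
  by move=> [i k] [j l] _ _ /= [-> ->].
- move=> [i k]; split.
    case=> hi hr; apply/allpairsPdep; exists i, k; split => //.
      by rewrite mem_iota; case/andP: hi => h1 h2; rewrite h1 /= add1n.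
    by rewrite mem_iota /= -reach_cnt.
  case/allpairsPdep => j [l [hj hl [-> ->]]].
  have hv' : valid_lane d s j.
    by move: hj; rewrite mem_iota add1n.
  split => //; by rewrite reach_cnt //; move: hl; rewrite mem_iota.
Qed.

Lemma sum_cnt T : ((sumn [seq cnt i T | i <- iota 1 (nlanes d s)])%:R : R) =
  \sum_(1 <= i < (nlanes d s).+1) (N_formula v d s i T)%:~R.
Proof.
rewrite sumnE big_map natr_sum /index_iota subSS subn0.
by apply: eq_bigr => i _; rewrite -cnt_formula.
Qed.

Lemma Nf_bounds i T : valid_lane d s i -> s / v <= T ->
  v * T / d - s / d <= (N_formula v d s i T)%:~R <= v * T / d + 1.
Proof.
move=> hi hT.
have hdi : 0 <= d^-1 by rewrite invr_ge0 ltW.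
have hm := dist_min _ hi.
have h0 := dist_ge0 (Jidx d s).
have hw := wl_ge0 i.
have hsi : dist_j d s i <= s by rewrite distE; lra.
rewrite /N_formula ifT; last first.
  apply: le_trans hT; rewrite ler_pM2r ?invr_gt0 //; lra.
set x := (v * T - dist_j d s i + dist_j d s (Jidx d s)) / d.
have hx1 : x <= v * T / d.
  by rewrite /x; apply: ler_wpM2r => //; lra.
have hx2 : v * T / d - s / d <= x.
  by rewrite /x -mulrBl; apply: ler_wpM2r => //; lra.
have f1 := floor_le (x + 1).
have f2 := floorD1_gt (x + 1).
rewrite intrD /= in f2.
apply/andP; split; lra.
Qed.

Lemma sum_bounds T : 0 < T -> s / v <= T ->
  (nlanes d s)%:R * (v * T / d - s / d) <= \sum_(1 <= i < (nlanes d s).+1) (N_formula v d s i T)%:~R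
  <= (nlanes d s)%:R * (v * T / d + 1).
Proof.
move=> T0 hT; apply/andP; split.
  rewrite -[X in X <= _](_ : \sum_(1 <= i < (nlanes d s).+1) (v * T / d - s / d) = _); last first.
    by rewrite sumr_const_nat subSS subn0 mulr_natl.
  apply: ler_sum_nat => i /andP[h1 h2].
  by case/andP: (Nf_bounds i T (introT andP (conj h1 h2)) hT).
rewrite -[X in _ <= X](_ : \sum_(1 <= i < (nlanes d s).+1) (v * T / d + 1) = _); last first.
  by rewrite sumr_const_nat subSS subn0 mulr_natl.
apply: ler_sum_nat => i /andP[h1 h2].
by case/andP: (Nf_bounds i T (introT andP (conj h1 h2)) hT).
Qed.

Lemma thr_eq T :
  throughput v d s T =
  T^-1 * (\sum_(1 <= i < (nlanes d s).+1) (N_formula v d s i T)%:~R) - T^-1.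
Proof.
by rewrite /throughput N_total_cnt sum_cnt mulrBl mul1r [_ * T^-1]mulrC.
Qed.

Lemma floorM : (Num.floor (2 * s / d + 1))%:~R = (nlanes d s)%:R :> R.
Proof.
rewrite floorDrz ?rpred1 // floor1 intrD /= -absz_floor2 /nlanes -[1%:~R]/(1 : R).
by rewrite natr1.
Qed.

Lemma lim_thr :
  throughput v d s x @[x --> +oo%R] --> ((Num.floor (2 * s / d + 1))%:~R * v / d : R).
Proof.
rewrite floorM; apply/cvgrPdist_le => e e0.
set Mr := (nlanes d s)%:R : R.
have hM : 0 <= Mr by rewrite ler0n.
have hb : 0 <= s / d by rewrite ltW // q_gt0.
set K := Mr * (s / d) + Mr + 1.
exists (Num.max (s / v) (K / e)); split; first exact: num_real.
move=> T; rewrite gt_max => /andP[h1 h2].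
have hsv : 0 < s / v by rewrite divr_gt0 // s_gt0.
have T0 : 0 < T by apply: lt_trans hsv h1.
have := sum_bounds T T0 (ltW h1); rewrite thr_eq.
set S := \sum_(1 <= i < _) _.
move=> /andP[l1 l2].
rewrite ltr_pdivrMr // in h2.
have -> : Mr * v / d - (T^-1 * S - T^-1) = (Mr * (v * T / d) - S + 1) / T.
  by field; rewrite !gt_eqF.
rewrite normrM [X in _ * X]gtr0_norm ?invr_gt0 // ler_pdivrMr // ler_norml.
set a := v * T / d; rewrite -/a in l1 l2.
have hMb : 0 <= Mr * (s / d) by apply: mulr_ge0.
rewrite /K in h2; apply/andP; split; lra.
Qed.

Lemma main :
  [/\ valid_lane d s (Jidx d s),
      (forall j : nat, valid_lane d s j -> dist_j d s (Jidx d s) <= dist_j d s j),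
      in_target s (robot_pos v d s (Jidx d s) 0 (first_arrival_time v d s)),
      (forall T : R, 0 < T ->
         (forall i : nat, valid_lane d s i ->
            (N_lane v d s i T)%:Z = N_formula v d s i T) /\
         throughput v d s T =
           T^-1 * (\sum_(1 <= i < (nlanes d s).+1) (N_formula v d s i T)%:~R) - T^-1)
    & throughput v d s x @[x --> +oo%R] --> ((Num.floor (2 * s / d + 1))%:~R * v / d : R)].
Proof.
have _ := (hv, hd, hs).
split.
- exact: validJ.
- exact: dist_min.
- rewrite first_eq; have := at_arrival _ 0 validJ; by rewrite mul0r addr0.
- move=> T T0; split; last exact: thr_eq.
  by move=> i hi; rewrite N_lane_cnt // cnt_formula.
- exact: lim_thr.
Qed.

End Pf.

Theorem proposition4 (R : realType) (v d s : R) :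
  0 < v -> 0 < d -> d / 2 <= s ->
  [/\ valid_lane d s (Jidx d s),
      (forall j : nat, valid_lane d s j -> dist_j d s (Jidx d s) <= dist_j d s j),
      in_target s (robot_pos v d s (Jidx d s) 0 (first_arrival_time v d s)),
      (forall T : R, 0 < T ->
         (forall i : nat, valid_lane d s i ->
            (N_lane v d s i T)%:Z = N_formula v d s i T) /\
         throughput v d s T =
           T^-1 * (\sum_(1 <= i < (nlanes d s).+1) (N_formula v d s i T)%:~R) - T^-1)
    & throughput v d s x @[x --> +oo%R] --> ((Num.floor (2 * s / d + 1))%:~R * v / d : R)].
Proof. move=> hv hd hs; exact: main. Qed.
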